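(* Let $\mathbf{k}$ be a field, let $U$ be a Hopf algebra over $\mathbf{k}$ and let $O$ be a central Hopf subalgebra of $U$. Let $\chi\in(\operatorname{Spec} O)(\mathbf{k})$, and let $R$ be the algebra of functions on the closed subgroup scheme of the affine group scheme $\operatorname{Spec} O$ generated by $\chi$, with $O\to R$ the natural (restriction) map. Then $U\otimes_O R$ is a Hopf algebra; more precisely, the ideal of the Hopf algebra $U\otimes_{\mathbf{k}} R$ generated by all elements $x\otimes 1-1\otimes\pi(x)$, $x\in O$, where $\pi:O\to R$ is the natural map, is a Hopf ideal, so that $U\otimes_O R$ inherits a Hopf algebra structure for which the quotient map $U\otimes_{\mathbf{k}}R\to U\otimes_O R$ is a Hopf algebra homomorphism.
   Context: Since $O$ is a commutative Hopf algebra, $\operatorname{Spec} O$ is an affine group scheme over $\mathbf{k}$, and its $\mathbf{k}$-points are the algebra homomorphisms $O\to\mathbf{k}$. The closed subgroup scheme generated by $\chi$ is the smallest closed subgroup scheme containing the point $\chi$; its coordinate ring $R$ is a quotient Hopf algebra of $O$. *)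

(* Defs.v *)
(* Hopf algebras over a field k, encoded without a tensor
   product library: an element of A (x)_k B is represented by a finite formal
   sum of pure tensors (a list of pairs); two such lists denote the same tensor
   iff every k-bilinear map agrees on them (the universal property / the
   definition of A (x) B as the free module modulo bilinearity relations). *)
From HB Require Import structures.
From mathcomp Require Import all_boot all_order all_algebra.
Set Implicit Arguments. Unset Strict Implicit. Unset Printing Implicit Defensive.
Import GRing.Theory.
Local Open Scope ring_scope.

Definition bilinear_map (k : fieldType) (A B W : lmodType k) (f : A -> B -> W)
  : Prop :=
  (forall (b : B) (c : k) (a a' : A), f (c *: a + a') b = c *: f a b + f a' b) /\
  (forall (a : A) (c : k) (b b' : B), f a (c *: b + b') = c *: f a b + f a b').

Definition trilinear_map (k : fieldType) (A B C W : lmodType k)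
  (f : A -> B -> C -> W) : Prop :=
  (forall (b : B) (d : C) (c : k) (a a' : A),
      f (c *: a + a') b d = c *: f a b d + f a' b d) /\
  (forall (a : A) (d : C) (c : k) (b b' : B),
      f a (c *: b + b') d = c *: f a b d + f a b' d) /\
  (forall (a : A) (b : B) (c : k) (d d' : C),
      f a b (c *: d + d') = c *: f a b d + f a b d').

Definition tens_eq (k : fieldType) (A B : lmodType k) (s t : seq (A * B))
  : Prop :=
  forall (W : lmodType k) (f : A -> B -> W), bilinear_map f ->
    \sum_(p <- s) f p.1 p.2 = \sum_(p <- t) f p.1 p.2.

Definition tens3_eq (k : fieldType) (A B C : lmodType k)
  (s t : seq (A * B * C)) : Prop :=
  forall (W : lmodType k) (f : A -> B -> C -> W), trilinear_map f ->
    \sum_(p <- s) f p.1.1 p.1.2 p.2 = \sum_(p <- t) f p.1.1 p.1.2 p.2.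

Definition is_hopf (k : fieldType) (H : algType k) (D : H -> seq (H * H))
  (e : H -> k) (S : H -> H) : Prop :=
  (forall (c : k) (u v : H),
      tens_eq (D (c *: u + v)) ([seq (c *: p.1, p.2) | p <- D u] ++ D v)) /\
  (forall u v : H,
      tens_eq (D (u * v)) [seq (p.1 * q.1, p.2 * q.2) | p <- D u, q <- D v]) /\
  tens_eq (D 1) [:: (1, 1)] /\
  (forall u : H,
      tens3_eq [seq (q.1, q.2, p.2) | p <- D u, q <- D p.1]
               [seq (p.1, q.1, q.2) | p <- D u, q <- D p.2]) /\
  (forall (c : k) (u v : H), e (c *: u + v) = c * e u + e v) /\
  (forall u v : H, e (u * v) = e u * e v) /\
  e 1 = 1 /\
  (forall u : H, \sum_(p <- D u) e p.1 *: p.2 = u) /\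
  (forall u : H, \sum_(p <- D u) e p.2 *: p.1 = u) /\
  (forall (c : k) (u v : H), S (c *: u + v) = c *: S u + S v) /\
  (forall u : H, \sum_(p <- D u) S p.1 * p.2 = (e u)%:A) /\
  (forall u : H, \sum_(p <- D u) p.1 * S p.2 = (e u)%:A).

(* f : H1 -> H2 is a morphism of Hopf algebras (= bialgebra morphism) *)
Definition hopf_hom (k : fieldType) (H1 H2 : algType k)
  (D1 : H1 -> seq (H1 * H1)) (e1 : H1 -> k)
  (D2 : H2 -> seq (H2 * H2)) (e2 : H2 -> k) (f : H1 -> H2) : Prop :=
  (forall (c : k) (u v : H1), f (c *: u + v) = c *: f u + f v) /\
  (forall u v : H1, f (u * v) = f u * f v) /\
  f 1 = 1 /\
  (forall u : H1, tens_eq (D2 (f u)) [seq (f p.1, f p.2) | p <- D1 u]) /\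
  (forall u : H1, e2 (f u) = e1 u).

Definition hopf_ideal (k : fieldType) (H : algType k) (D : H -> seq (H * H))
  (e : H -> k) (S : H -> H) (I : H -> Prop) : Prop :=
  I 0 /\
  (forall u v : H, I u -> I v -> I (u + v)) /\
  (forall (c : k) (u : H), I u -> I (c *: u)) /\
  (forall a u b : H, I u -> I (a * u * b)) /\
  (forall u : H, I u ->
     exists s : seq (H * H), tens_eq (D u) s /\
       (forall p, p \in s -> I p.1 \/ I p.2)) /\
  (forall u : H, I u -> e u = 0) /\
  (forall u : H, I u -> I (S u)).

(* a k-point chi of Spec O: a k-algebra homomorphism O -> k *)
Definition kpoint (k : fieldType) (O : algType k) (chi : O -> k) : Prop :=
  (forall (c : k) (u v : O), chi (c *: u + v) = c * chi u + chi v) /\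
  (forall u v : O, chi (u * v) = chi u * chi v) /\
  chi 1 = 1.

(* I is the Hopf ideal defining the closed subgroup scheme of Spec O generated
   by chi: closed subgroup schemes of Spec O are the V(I), I a Hopf ideal;
   chi lies in V(I) iff chi vanishes on I; the smallest such subgroup scheme
   corresponds to the largest such Hopf ideal. *)
Definition gen_subgroup_ideal (k : fieldType) (O : algType k)
  (D : O -> seq (O * O)) (e : O -> k) (S : O -> O) (chi : O -> k)
  (I : O -> Prop) : Prop :=
  hopf_ideal D e S I /\ (forall x, I x -> chi x = 0) /\
  (forall I' : O -> Prop, hopf_ideal D e S I' ->
     (forall x, I' x -> chi x = 0) -> forall x, I' x -> I x).

Definition is_tensor_algebra (k : fieldType) (A B T : algType k)
  (rho : A -> B -> T) : Prop :=
  bilinear_map rho /\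
  (forall (a a' : A) (b b' : B), rho a b * rho a' b' = rho (a * a') (b * b')) /\
  rho 1 1 = 1 /\
  (forall (W : lmodType k) (f : A -> B -> W), bilinear_map f ->
     exists g : T -> W,
       (forall (c : k) (x y : T), g (c *: x + y) = c *: g x + g y) /\
       (forall a b, g (rho a b) = f a b) /\
       (forall g' : T -> W,
          (forall (c : k) (x y : T), g' (c *: x + y) = c *: g' x + g' y) ->
          (forall a b, g' (rho a b) = f a b) -> forall x, g' x = g x)).

Definition tensor_hopf_structure (k : fieldType) (A B T : algType k)
  (rho : A -> B -> T)
  (DA : A -> seq (A * A)) (eA : A -> k) (SA : A -> A)
  (DB : B -> seq (B * B)) (eB : B -> k) (SB : B -> B)
  (DT : T -> seq (T * T)) (eT : T -> k) (ST : T -> T) : Prop :=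
  (forall (c : k) (x y : T),
      tens_eq (DT (c *: x + y)) ([seq (c *: p.1, p.2) | p <- DT x] ++ DT y)) /\
  (forall a b, tens_eq (DT (rho a b))
       [seq (rho p.1 q.1, rho p.2 q.2) | p <- DA a, q <- DB b]) /\
  (forall (c : k) (x y : T), eT (c *: x + y) = c * eT x + eT y) /\
  (forall a b, eT (rho a b) = eA a * eB b) /\
  (forall (c : k) (x y : T), ST (c *: x + y) = c *: ST x + ST y) /\
  (forall a b, ST (rho a b) = rho (SA a) (SB b)).

(* Main.v *)
Require Import Defs.
From HB Require Import structures.
From mathcomp Require Import all_boot all_order all_algebra.
Import GRing.Theory.
Local Open Scope ring_scope.
Set Implicit Arguments. Unset Strict Implicit. Unset Printing Implicit Defensive.

Section Gen.
Variable k : fieldType.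

Definition lin (V W : lmodType k) (g : V -> W) :=
  forall (c : k) (x y : V), g (c *: x + y) = c *: g x + g y.
Definition link (V : lmodType k) (g : V -> k) :=
  forall (c : k) (x y : V), g (c *: x + y) = c * g x + g y.

Section LinTh.
Variables (V W : lmodType k) (g : V -> W) (hg : lin g).
Lemma lin0 : g 0 = 0.
Proof. have E := hg 1 0 0; rewrite !scale1r addr0 in E.
by apply: (addrI (g 0)); rewrite -E addr0. Qed.
Lemma linD x y : g (x + y) = g x + g y.
Proof. by have := hg 1 x y; rewrite !scale1r. Qed.
Lemma linZ c x : g (c *: x) = c *: g x.
Proof. by have := hg c x 0; rewrite addr0 lin0 addr0. Qed.
Lemma linN x : g (- x) = - g x.
Proof. by have := linZ (-1) x; rewrite !scaleN1r. Qed.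
Lemma linB x y : g (x - y) = g x - g y.
Proof. by rewrite linD linN. Qed.
Lemma lin_sum (I : Type) (s : seq I) (F : I -> V) :
  g (\sum_(i <- s) F i) = \sum_(i <- s) g (F i).
Proof. elim: s => [|i s IH]; first by rewrite !big_nil lin0.
by rewrite !big_cons linD IH. Qed.
End LinTh.

Section LinkTh.
Variables (V : lmodType k) (g : V -> k) (hg : link g).
Lemma link0 : g 0 = 0.
Proof. have E := hg 1 0 0; rewrite scale1r mul1r addr0 in E.
by apply: (addrI (g 0)); rewrite -E addr0. Qed.
Lemma linkD x y : g (x + y) = g x + g y.
Proof. by have := hg 1 x y; rewrite scale1r mul1r. Qed.
Lemma linkZ c x : g (c *: x) = c * g x.
Proof. by have := hg c x 0; rewrite addr0 link0 addr0. Qed.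
Lemma linkN x : g (- x) = - g x.
Proof. by have := linkZ (-1) x; rewrite scaleN1r mulN1r. Qed.
Lemma linkB x y : g (x - y) = g x - g y.
Proof. by rewrite linkD linkN. Qed.
Lemma link_sum (I : Type) (s : seq I) (F : I -> V) :
  g (\sum_(i <- s) F i) = \sum_(i <- s) g (F i).
Proof. elim: s => [|i s IH]; first by rewrite !big_nil link0.
by rewrite !big_cons linkD IH. Qed.
End LinkTh.

Lemma lin_app (U V W : lmodType k) (h : V -> W) (g : U -> V) :
  lin h -> lin g -> lin (fun x => h (g x)).
Proof. by move=> hh hg c x y; rewrite hg hh. Qed.
Lemma lin_id (V : lmodType k) : lin (fun x : V => x).
Proof. by []. Qed.
Lemma lin_zero (V W : lmodType k) : lin (fun _ : V => (0 : W)).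
Proof. by move=> c x y; rewrite scaler0 addr0. Qed.
Lemma lin_add (V W : lmodType k) (g h : V -> W) :
  lin g -> lin h -> lin (fun x => g x + h x).
Proof. by move=> hg hh c x y; rewrite hg hh scalerDr addrACA. Qed.
Lemma lin_sub (V W : lmodType k) (g h : V -> W) :
  lin g -> lin h -> lin (fun x => g x - h x).
Proof. by move=> hg hh c x y; rewrite hg hh scalerBr opprD addrACA. Qed.
Lemma lin_sumf (V W : lmodType k) (I : Type) (s : seq I) (F : I -> V -> W) :
  (forall i, lin (F i)) -> lin (fun x => \sum_(i <- s) F i x).
Proof. move=> hF c x y; rewrite scaler_sumr -big_split.
by apply: eq_bigr => i _; apply: hF. Qed.
Lemma lin_mul_l (V : lmodType k) (A : algType k) (g : V -> A) (a : A) :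
  lin g -> lin (fun x => g x * a).
Proof. by move=> hg c x y; rewrite hg mulrDl scalerAl. Qed.
Lemma lin_mul_r (V : lmodType k) (A : algType k) (g : V -> A) (a : A) :
  lin g -> lin (fun x => a * g x).
Proof. by move=> hg c x y; rewrite hg mulrDr scalerAr. Qed.
Lemma lin_scale (V W : lmodType k) (g : V -> W) (a : k) :
  lin g -> lin (fun x => a *: g x).
Proof. by move=> hg c x y; rewrite hg scalerDr !scalerA mulrC. Qed.
Lemma lin_scalk (V W : lmodType k) (g : V -> k) (w : W) :
  link g -> lin (fun x => g x *: w).
Proof. by move=> hg c x y; rewrite hg scalerDl scalerA. Qed.
Lemma lin_alg (V : lmodType k) (A : algType k) (g : V -> k) :
  link g -> lin (fun x => (g x)%:A : A).
Proof. exact: lin_scalk. Qed.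

Lemma mkbil (A B W : lmodType k) (f : A -> B -> W) :
  (forall b, lin (fun a => f a b)) -> (forall a, lin (fun b => f a b)) ->
  bilinear_map f.
Proof. by move=> h1 h2; split. Qed.
Lemma mktril (A B C W : lmodType k) (f : A -> B -> C -> W) :
  (forall b d, lin (fun a => f a b d)) -> (forall a d, lin (fun b => f a b d)) ->
  (forall a b, lin (fun d => f a b d)) -> trilinear_map f.
Proof. by move=> h1 h2 h3; split; [|split]. Qed.

Section Bil.
Variables (A B W : lmodType k) (f : A -> B -> W) (bf : bilinear_map f).
Lemma bil_l b : lin (fun a => f a b). Proof. exact: bf.1. Qed.
Lemma bil_r a : lin (fun b => f a b). Proof. exact: bf.2. Qed.
Lemma bilDl a a' b : f (a + a') b = f a b + f a' b. Proof. exact: (linD (bil_l b)). Qed.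
Lemma bilDr a b b' : f a (b + b') = f a b + f a b'. Proof. exact: (linD (bil_r a)). Qed.
Lemma bilZl c a b : f (c *: a) b = c *: f a b. Proof. exact: (linZ (bil_l b)). Qed.
Lemma bilZr c a b : f a (c *: b) = c *: f a b. Proof. exact: (linZ (bil_r a)). Qed.
Lemma bilNl a b : f (- a) b = - f a b. Proof. exact: (linN (bil_l b)). Qed.
Lemma bilNr a b : f a (- b) = - f a b. Proof. exact: (linN (bil_r a)). Qed.
Lemma bilBl a a' b : f (a - a') b = f a b - f a' b. Proof. exact: (linB (bil_l b)). Qed.
Lemma bilBr a b b' : f a (b - b') = f a b - f a b'. Proof. exact: (linB (bil_r a)). Qed.
Lemma bil0l b : f 0 b = 0. Proof. exact: (lin0 (bil_l b)). Qed.
Lemma bil0r a : f a 0 = 0. Proof. exact: (lin0 (bil_r a)). Qed.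
Lemma bil_suml (I : Type) (s : seq I) (F : I -> A) b :
  f (\sum_(i <- s) F i) b = \sum_(i <- s) f (F i) b.
Proof. exact: (lin_sum (bil_l b)). Qed.
Lemma bil_sumr (I : Type) (s : seq I) (F : I -> B) a :
  f a (\sum_(i <- s) F i) = \sum_(i <- s) f a (F i).
Proof. exact: (lin_sum (bil_r a)). Qed.
End Bil.
Section Tril.
Variables (A B C W : lmodType k) (f : A -> B -> C -> W) (tf : trilinear_map f).
Lemma tril_1 b d : lin (fun a => f a b d). Proof. exact: tf.1. Qed.
Lemma tril_2 a d : lin (fun b => f a b d). Proof. exact: tf.2.1. Qed.
Lemma tril_3 a b : lin (fun d => f a b d). Proof. exact: tf.2.2. Qed.
End Tril.

Lemma sum_allp (I J L : Type) (W : zmodType) (s : seq I) (t : I -> seq J)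
  (h : I -> J -> L) (F : L -> W) :
  \sum_(z <- flatten [seq [seq h x y | y <- t x] | x <- s]) F z =
  \sum_(x <- s) \sum_(y <- t x) F (h x y).
Proof. rewrite big_flatten big_map; apply: eq_bigr => x _; by rewrite big_map. Qed.

Lemma tensP (A B W : lmodType k) (s t : seq (A * B)) (F : A * B -> W) :
  tens_eq s t -> bilinear_map (fun x y => F (x, y)) ->
  \sum_(p <- s) F p = \sum_(p <- t) F p.
Proof.
move=> h bf.
have E1 r : \sum_(p <- r) (fun x y => F (x, y)) p.1 p.2 = \sum_(p <- r) F p.
  by apply: eq_bigr => -[].
by rewrite -!E1; exact: (h W _ bf).
Qed.

Lemma tens3P (A B C W : lmodType k) (s t : seq (A * B * C)) (F : A * B * C -> W) :
  tens3_eq s t -> trilinear_map (fun x y z => F (x, y, z)) ->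
  \sum_(p <- s) F p = \sum_(p <- t) F p.
Proof.
move=> h bf.
have E1 r : \sum_(p <- r) (fun x y z => F (x, y, z)) p.1.1 p.1.2 p.2 = \sum_(p <- r) F p.
  by apply: eq_bigr => -[[]].
by rewrite -!E1; exact: (h W _ bf).
Qed.

Lemma exch4 (I J L M : Type) (W : zmodType) (A : seq I) (B : I -> seq J)
  (C : seq L) (E : L -> seq M) (Y : I -> J -> L -> M -> W) :
  \sum_(a <- A) \sum_(b <- B a) \sum_(c <- C) \sum_(d <- E c) Y a b c d =
  \sum_(c <- C) \sum_(d <- E c) \sum_(a <- A) \sum_(b <- B a) Y a b c d.
Proof.
transitivity (\sum_(a <- A) \sum_(c <- C) \sum_(d <- E c) \sum_(b <- B a) Y a b c d).
  apply: eq_bigr => a _; rewrite exchange_big; apply: eq_bigr => c _.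
  by rewrite exchange_big.
rewrite exchange_big; apply: eq_bigr => c _.
by rewrite exchange_big.
Qed.
Lemma cs_linF (H W : lmodType k) (D : H -> seq (H * H))
  (hDl : forall (c : k) (u v : H),
      tens_eq (D (c *: u + v)) ([seq (c *: p.1, p.2) | p <- D u] ++ D v))
  (F : H * H -> W) :
  bilinear_map (fun x y => F (x, y)) -> lin (fun u => \sum_(p <- D u) F p).
Proof.
move=> bf c x y /=; rewrite (tensP (hDl c x y) bf) big_cat big_map scaler_sumr.
congr (_ + _); apply: eq_bigr => -[a b] _ /=.
exact: (linZ (bil_l bf b)).
Qed.
Lemma bil_lc (A B V W : lmodType k) (f : A -> B -> W) (g : V -> A) b :
  bilinear_map f -> lin g -> lin (fun x => f (g x) b).
Proof. by move=> bf lg; apply: (lin_app (bil_l bf b) lg). Qed.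
Lemma bil_rc (A B V W : lmodType k) (f : A -> B -> W) (g : V -> B) a :
  bilinear_map f -> lin g -> lin (fun x => f a (g x)).
Proof. by move=> bf lg; apply: (lin_app (bil_r bf a) lg). Qed.
Lemma tril_1c (A B C V W : lmodType k) (f : A -> B -> C -> W) (g : V -> A) b d :
  trilinear_map f -> lin g -> lin (fun x => f (g x) b d).
Proof. by move=> tf lg; apply: (lin_app (tril_1 tf b d) lg). Qed.
Lemma tril_2c (A B C V W : lmodType k) (f : A -> B -> C -> W) (g : V -> B) a d :
  trilinear_map f -> lin g -> lin (fun x => f a (g x) d).
Proof. by move=> tf lg; apply: (lin_app (tril_2 tf a d) lg). Qed.
Lemma tril_3c (A B C V W : lmodType k) (f : A -> B -> C -> W) (g : V -> C) a b :
  trilinear_map f -> lin g -> lin (fun x => f a b (g x)).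
Proof. by move=> tf lg; apply: (lin_app (tril_3 tf a b) lg). Qed.

Lemma cs_linG (V H W : lmodType k) (D : H -> seq (H * H))
  (hDl : forall (c : k) (u v : H),
      tens_eq (D (c *: u + v)) ([seq (c *: p.1, p.2) | p <- D u] ++ D v))
  (g : V -> H) (F : H * H -> W) : lin g ->
  bilinear_map (fun x y => F (x, y)) -> lin (fun u => \sum_(p <- D (g u)) F p).
Proof. move=> lg bf; exact: (lin_app (cs_linF hDl bf) lg). Qed.
End Gen.

Ltac lin_tac :=
  repeat (first
   [ match goal with |- forall _, _ => intro end
   | progress simpl
   | match goal with |- bilinear_map _ => apply: mkbil end
   | match goal with |- trilinear_map _ => apply: mktril end
   | apply: lin_id
   | apply: lin_zero
   | apply: lin_sumf
   | apply: lin_add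
   | apply: lin_sub
   | apply: lin_scale
   | apply: lin_mul_l
   | apply: lin_mul_r
   | apply: lin_scalk; solve [eassumption]
   | match goal with
     | bf : bilinear_map ?f |- lin (fun x => ?f x ?b) => exact: (bil_l bf b)
     | bf : bilinear_map ?f |- lin (fun x => ?f ?a x) => exact: (bil_r bf a)
     | bf : bilinear_map ?f |- lin (?f ?a) => exact: (bil_r bf a)
     | tf : trilinear_map ?f |- lin (fun x => ?f x ?b ?d) => exact: (tril_1 tf b d)
     | tf : trilinear_map ?f |- lin (fun x => ?f ?a x ?d) => exact: (tril_2 tf a d)
     | tf : trilinear_map ?f |- lin (fun x => ?f ?a ?b x) => exact: (tril_3 tf a b)
     | tf : trilinear_map ?f |- lin (?f ?a ?b) => exact: (tril_3 tf a b)
     end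
   | (eapply cs_linF; [eassumption|])
   | (eapply bil_lc; [eassumption|])
   | (eapply bil_rc; [eassumption|])
   | (eapply tril_1c; [eassumption|])
   | (eapply tril_2c; [eassumption|])
   | (eapply tril_3c; [eassumption|])
   | (eapply lin_app; [eassumption|])
   | (eapply cs_linG; [eassumption| |])
   | eassumption ]).


Ltac hopf_destr hH :=
  let hDl := fresh "hDl" in let hDm := fresh "hDm" in let hD1 := fresh "hD1" in
  let hco := fresh "hco" in let hel := fresh "hel" in let hem := fresh "hem" in
  let he1 := fresh "he1" in let hcu1 := fresh "hcu1" in let hcu2 := fresh "hcu2" in
  let hSl := fresh "hSl" in let ha1 := fresh "ha1" in let ha2 := fresh "ha2" in
  have [hDl [hDm [hD1 [hco [hel [hem [he1 [hcu1 [hcu2 [hSl [ha1 ha2]]]]]]]]]]] := hH.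

Section Hopf.
Variable k : fieldType.
Variables (H : algType k) (D : H -> seq (H * H)) (e : H -> k) (S : H -> H).
Hypothesis hH : is_hopf D e S.

Lemma coasP (W : lmodType k) (Psi : H -> H -> H -> W) u :
  trilinear_map Psi ->
  \sum_(p <- D u) \sum_(q <- D p.1) Psi q.1 q.2 p.2 =
  \sum_(p <- D u) \sum_(q <- D p.2) Psi p.1 q.1 q.2.
Proof.
move=> tP; hopf_destr hH.
have := tens3P (F := fun z => Psi z.1.1 z.1.2 z.2) (hco u).
by rewrite !sum_allp /=; apply.
Qed.

Lemma S1 : S 1 = 1.
Proof.
hopf_destr hH.
have := ha1 1; rewrite (tensP hD1) ?big_seq1 /= ?he1 ?mulr1 ?scale1r //.
lin_tac.
Qed.

Definition conv2 (F G : H -> H -> H) u v :=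
  \sum_(p <- D u) \sum_(q <- D v) F p.1 q.1 * G p.2 q.2.

Lemma conv2A F G K u v : bilinear_map F -> bilinear_map G -> bilinear_map K ->
  conv2 (conv2 F G) K u v = conv2 F (conv2 G K) u v.
Proof.
move=> bF bG bK; rewrite /conv2.
pose Psi a b c := \sum_(q <- D v) \sum_(q' <- D q.1) F a q'.1 * G b q'.2 * K c q.2.
pose Phi a b c := \sum_(p <- D u) \sum_(p' <- D p.2) F p.1 a * G p'.1 b * K p'.2 c.
transitivity (\sum_(p <- D u) \sum_(p' <- D p.1) Psi p'.1 p'.2 p.2).
  apply: eq_bigr => p _; rewrite /Psi [RHS]exchange_big; apply: eq_bigr => q _.
  rewrite mulr_suml; apply: eq_bigr => p' _; by rewrite mulr_suml.
rewrite coasP; last by rewrite /Psi; lin_tac.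
transitivity (\sum_(q <- D v) \sum_(q' <- D q.1) Phi q'.1 q'.2 q.2).
  by rewrite /Psi /Phi exch4.
rewrite coasP; last by rewrite /Phi; lin_tac.
rewrite /Phi; symmetry.
transitivity (\sum_(p <- D u) \sum_(p' <- D p.2) \sum_(q <- D v) \sum_(q' <- D q.2)
   F p.1 q.1 * G p'.1 q'.1 * K p'.2 q'.2).
  apply: eq_bigr => p _; rewrite [RHS]exchange_big; apply: eq_bigr => q _.
  rewrite mulr_sumr; apply: eq_bigr => p' _; rewrite mulr_sumr.
  by apply: eq_bigr => q' _; rewrite mulrA.
by rewrite exch4.
Qed.

Lemma conv2_ext F F' G G' u v : (forall a b, F a b = F' a b) ->
  (forall a b, G a b = G' a b) -> conv2 F G u v = conv2 F' G' u v.
Proof.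
move=> hF hG; rewrite /conv2; apply: eq_bigr => p _; apply: eq_bigr => q _.
by rewrite hF hG.
Qed.

Definition E2 (a b : H) : H := (e a * e b)%:A.

Lemma conv2_unitr F u v : bilinear_map F -> conv2 F E2 u v = F u v.
Proof.
move=> bF; hopf_destr hH; rewrite /conv2 /E2.
transitivity (\sum_(p <- D u) e p.2 *: F p.1 v).
  apply: eq_bigr => p _; rewrite -[in RHS](hcu2 v) (bil_sumr bF) scaler_sumr.
  by apply: eq_bigr => q _; rewrite (bilZr bF) mulr_algr scalerA.
by rewrite -{2}(hcu2 u) (bil_suml bF); apply: eq_bigr => p _; rewrite (bilZl bF).
Qed.

Lemma conv2_unitl F u v : bilinear_map F -> conv2 E2 F u v = F u v.
Proof.
move=> bF; hopf_destr hH; rewrite /conv2 /E2.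
transitivity (\sum_(p <- D u) e p.1 *: F p.2 v).
  apply: eq_bigr => p _; rewrite -[in RHS](hcu1 v) (bil_sumr bF) scaler_sumr.
  by apply: eq_bigr => q _; rewrite (bilZr bF) mulr_algl scalerA.
by rewrite -{2}(hcu1 u) (bil_suml bF); apply: eq_bigr => p _; rewrite (bilZl bF).
Qed.

Lemma S_antimul u v : S (u * v) = S v * S u.
Proof.
hopf_destr hH.
have bN : bilinear_map (fun a b => S (a * b)) by lin_tac.
have bm : bilinear_map (fun a b : H => a * b) by lin_tac.
have bM : bilinear_map (fun a b => S b * S a) by lin_tac.
have c1 a b : conv2 (fun a b => S (a * b)) (fun a b => a * b) a b = E2 a b.
  rewrite /conv2 /E2 -hem -ha1 (tensP (hDm a b)); last by lin_tac.
  by rewrite sum_allp.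
have c2 a b : conv2 (fun a b => a * b) (fun a b => S b * S a) a b = E2 a b.
  rewrite /conv2 /E2.
  transitivity (\sum_(p <- D a) p.1 * (\sum_(q <- D b) q.1 * S q.2) * S p.2).
    apply: eq_bigr => p _; rewrite mulr_sumr mulr_suml; apply: eq_bigr => q _.
    by rewrite !mulrA.
  rewrite ha2; under eq_bigr do rewrite mulr_algr -scalerAl.
  by rewrite -scaler_sumr ha2 scalerA [e b * _]mulrC.
rewrite -(conv2_unitr u v bN).
transitivity (conv2 (fun a b => S (a * b)) (conv2 (fun a b : H => a * b) (fun a b => S b * S a)) u v).
  by apply: conv2_ext => // a b; rewrite c2.
rewrite -conv2A //.
transitivity (conv2 E2 (fun a b => S b * S a) u v).
  by apply: conv2_ext => // a b; rewrite c1.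
by rewrite conv2_unitl.
Qed.
End Hopf.

Section HomS.
Variable k : fieldType.
Variables (O : algType k) (DO : O -> seq (O * O)) (eO : O -> k) (SO : O -> O).
Hypothesis hO : is_hopf DO eO SO.
Variables (H : algType k) (D : H -> seq (H * H)) (e : H -> k) (S : H -> H).
Hypothesis hH : is_hopf D e S.
Variable f : O -> H.
Hypothesis hf : hopf_hom DO eO D e f.

Definition conv1 (F G : O -> H) x := \sum_(p <- DO x) F p.1 * G p.2.

Lemma conv1_ext F F' G G' x : (forall a, F a = F' a) ->
  (forall a, G a = G' a) -> conv1 F G x = conv1 F' G' x.
Proof. by move=> hF hG; rewrite /conv1; apply: eq_bigr => p _; rewrite hF hG. Qed.

Lemma conv1A F G K x : lin F -> lin G -> lin K ->
  conv1 (conv1 F G) K x = conv1 F (conv1 G K) x.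
Proof.
move=> lF lG lK; rewrite /conv1.
pose Psi a b c := F a * G b * K c.
transitivity (\sum_(p <- DO x) \sum_(q <- DO p.1) Psi q.1 q.2 p.2).
  by apply: eq_bigr => p _; rewrite mulr_suml.
rewrite (coasP hO); last by rewrite /Psi; lin_tac.
by apply: eq_bigr => p _; rewrite mulr_sumr; apply: eq_bigr => q _; rewrite /Psi mulrA.
Qed.

Definition E1 (x : O) : H := (eO x)%:A.

Lemma conv1_unitr F x : lin F -> conv1 F E1 x = F x.
Proof.
move=> lF; hopf_destr hO; rewrite /conv1 /E1.
rewrite -{2}(hcu2 x) (lin_sum lF); apply: eq_bigr => p _.
by rewrite (linZ lF) mulr_algr.
Qed.

Lemma conv1_unitl F x : lin F -> conv1 E1 F x = F x.
Proof.
move=> lF; hopf_destr hO; rewrite /conv1 /E1.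
rewrite -{2}(hcu1 x) (lin_sum lF); apply: eq_bigr => p _.
by rewrite (linZ lF) mulr_algl.
Qed.

Lemma hom_S x : S (f x) = f (SO x).
Proof.
have [fl [fm [f1 [fD fe]]]] := hf.
have lSf : lin (fun a => S (f a)) by hopf_destr hH; lin_tac.
have lfS : lin (fun a => f (SO a)) by hopf_destr hO; lin_tac.
have c1 a : conv1 (fun a => S (f a)) f a = E1 a.
  hopf_destr hH; rewrite /conv1 /E1 -fe -ha1 (tensP (fD a)); last by lin_tac.
  by rewrite big_map.
have c2 a : conv1 f (fun a => f (SO a)) a = E1 a.
  hopf_destr hO; rewrite /conv1 /E1.
  under eq_bigr do rewrite -fm.
  rewrite -(lin_sum fl) ha2.
  by have := fl (eO a) 1 0; rewrite addr0 (lin0 fl) addr0 f1.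
rewrite -(conv1_unitr x lSf).
rewrite (conv1_ext x (F' := fun a => S (f a)) (G' := conv1 f (fun a => f (SO a)))) //.
rewrite -conv1A //.
rewrite (conv1_ext x (F' := E1) (G' := fun a => f (SO a))) //.
by rewrite conv1_unitl.
Qed.
End HomS.

Section Main.
Variable k : fieldType.
Variables (U : algType k) (DU : U -> seq (U * U)) (eU : U -> k) (SU : U -> U).
Hypothesis hU : is_hopf DU eU SU.
Variables (O : comAlgType k) (DO : O -> seq (O * O)) (eO : O -> k) (SO : O -> O).
Hypothesis hO : is_hopf DO eO SO.
Variables (iota : O -> U).
Hypothesis hiota : hopf_hom DO eO DU eU iota.
Hypothesis iota_central : forall (x : O) (u : U), iota x * u = u * iota x.
Variables (R : comAlgType k) (DR : R -> seq (R * R)) (eR : R -> k) (SR : R -> R).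
Hypothesis hR : is_hopf DR eR SR.
Variables (pi : O -> R).
Hypothesis hpi : hopf_hom DO eO DR eR pi.
Variables (T : algType k) (rho : U -> R -> T).
Hypothesis hT : is_tensor_algebra rho.
Variables (DT : T -> seq (T * T)) (eT : T -> k) (ST : T -> T).
Hypothesis hDT : tensor_hopf_structure rho DU eU SU DR eR SR DT eT ST.

Ltac tdestr :=
  have [brho [rmul [r11 univ]]] := hT;
  have [hDTl [hDTr [hETl [hETr [hSTl hSTr]]]]] := hDT.

Lemma span (W : lmodType k) (h1 h2 : T -> W) : lin h1 -> lin h2 ->
  (forall a b, h1 (rho a b) = h2 (rho a b)) -> forall t, h1 t = h2 t.
Proof.
move=> l1 l2 hab t; tdestr.
have [|g [gl [grho guniq]]] := univ W (fun _ _ => 0); first by lin_tac.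
have l3 : lin (fun t => h1 t - h2 t) by apply: lin_sub.
have E1 := guniq _ l3 (fun a b => etrans (congr1 (fun z => z - h2 (rho a b)) (hab a b)) (subrr _)).
have E2 := guniq _ (@lin_zero k T W) (fun a b => erefl).
by apply/eqP; rewrite -subr_eq0; apply/eqP; rewrite E1 -(E2 t).
Qed.

Lemma span_k (h1 h2 : T -> k) : link h1 -> link h2 ->
  (forall a b, h1 (rho a b) = h2 (rho a b)) -> forall t, h1 t = h2 t.
Proof. move=> l1 l2; exact: (@span k^o h1 h2 l1 l2). Qed.

Lemma csT_rho (W : lmodType k) (F : T * T -> W) a b :
  bilinear_map (fun x y => F (x, y)) ->
  \sum_(p <- DT (rho a b)) F p =
  \sum_(pa <- DU a) \sum_(pb <- DR b) F (rho pa.1 pb.1, rho pa.2 pb.2).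
Proof. move=> bF; tdestr; by rewrite (tensP (hDTr a b)) // sum_allp. Qed.

Lemma DT_mul (x y : T) :
  tens_eq (DT (x * y)) [seq (p.1 * q.1, p.2 * q.2) | p <- DT x, q <- DT y].
Proof.
move=> W f bf; rewrite sum_allp /=; tdestr.
hopf_destr hU; hopf_destr hR.
move: x; eapply (@span W); [by lin_tac|by lin_tac|move=> a b].
move: y; eapply (@span W); [by lin_tac|by lin_tac|move=> a2 b2].
rewrite rmul csT_rho; last by lin_tac.
rewrite (tensP (hDm a a2)); last by lin_tac.
rewrite sum_allp /=.
rewrite csT_rho; last by lin_tac.
under [RHS]eq_bigr => pa _ do under eq_bigr => pb _ do (rewrite csT_rho; last by lin_tac).
apply: eq_bigr => pa _; rewrite [RHS]exchange_big; apply: eq_bigr => qa _ /=.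
rewrite (tensP (hDm0 b b2)); last by lin_tac.
rewrite sum_allp /=.
apply: eq_bigr => pb _; apply: eq_bigr => qb _ /=.
by rewrite !rmul.
Qed.

Lemma DT_one : tens_eq (DT 1) [:: (1, 1)].
Proof.
move=> W f bf; tdestr; hopf_destr hU; hopf_destr hR.
rewrite -r11 csT_rho; last by lin_tac.
rewrite (tensP hD1); last by lin_tac.
rewrite big_seq1 /= (tensP hD0); last by lin_tac.
by rewrite !big_seq1.
Qed.

Lemma DT_coas (t : T) :
  tens3_eq [seq (q.1, q.2, p.2) | p <- DT t, q <- DT p.1]
           [seq (p.1, q.1, q.2) | p <- DT t, q <- DT p.2].
Proof.
move=> W f tf; rewrite !sum_allp /=; tdestr; hopf_destr hU; hopf_destr hR.
move: t; eapply (@span W); [by lin_tac|by lin_tac|move=> a b].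
rewrite csT_rho /=; last by lin_tac.
under eq_bigr => pa _ do under eq_bigr => pb _ do (rewrite csT_rho; last by lin_tac).
rewrite csT_rho /=; last by lin_tac.
under [RHS]eq_bigr => pa _ do under eq_bigr => pb _ do (rewrite csT_rho; last by lin_tac).
pose Psi := (fun x y z => \sum_(pb <- DR b) \sum_(qb <- DR pb.1)
     f (rho x qb.1) (rho y qb.2) (rho z pb.2)).
transitivity (\sum_(pa <- DU a) \sum_(qa <- DU pa.1) Psi qa.1 qa.2 pa.2).
  by apply: eq_bigr => pa _ /=; rewrite exchange_big.
rewrite (coasP hU (Psi := Psi)); last by rewrite /Psi; lin_tac.
rewrite /Psi.
apply: eq_bigr => pa _; rewrite [RHS]exchange_big; apply: eq_bigr => qa _ /=.
rewrite (coasP hR (Psi := fun x y z => f (rho pa.1 x) (rho qa.1 y) (rho qa.2 z))) //.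
by lin_tac.
Qed.

Lemma eT_mul (x y : T) : eT (x * y) = eT x * eT y.
Proof.
tdestr; hopf_destr hU; hopf_destr hR.
move: x; apply: span_k => [c x x'|c x x'|a b].
- by rewrite mulrDl -scalerAl hETl.
- by rewrite hETl mulrDl mulrA.
move: y; apply: span_k => [c x x'|c x x'|a2 b2].
- by rewrite mulrDr -scalerAr hETl.
- by rewrite hETl mulrDr !mulrA [_ * c]mulrC.
by rewrite rmul !hETr hem hem0 mulrACA.
Qed.

Lemma eT_one : eT 1 = 1.
Proof. tdestr; hopf_destr hU; hopf_destr hR. by rewrite -r11 hETr he1 he0 mulr1. Qed.

Lemma T_cu1 (t : T) : \sum_(p <- DT t) eT p.1 *: p.2 = t.
Proof.
tdestr; hopf_destr hU; hopf_destr hR.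
move: t; eapply (@span T); [by lin_tac|by lin_tac|move=> a b].
rewrite csT_rho /=; last by lin_tac.
rewrite -[in RHS](hcu1 a) -[in RHS](hcu0 b) (bil_suml brho).
apply: eq_bigr => pa _; rewrite (bilZl brho) (bil_sumr brho) scaler_sumr.
by apply: eq_bigr => pb _; rewrite (bilZr brho) scalerA hETr.
Qed.

Lemma T_cu2 (t : T) : \sum_(p <- DT t) eT p.2 *: p.1 = t.
Proof.
tdestr; hopf_destr hU; hopf_destr hR.
move: t; eapply (@span T); [by lin_tac|by lin_tac|move=> a b].
rewrite csT_rho /=; last by lin_tac.
rewrite -[in RHS](hcu2 a) -[in RHS](hcu3 b) (bil_suml brho).
apply: eq_bigr => pa _; rewrite (bilZl brho) (bil_sumr brho) scaler_sumr.
by apply: eq_bigr => pb _; rewrite (bilZr brho) scalerA hETr.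
Qed.

Lemma T_ant1 (t : T) : \sum_(p <- DT t) ST p.1 * p.2 = (eT t)%:A.
Proof.
tdestr; hopf_destr hU; hopf_destr hR.
move: t; eapply (@span T); [by lin_tac|by lin_tac|move=> a b].
rewrite csT_rho /=; last by lin_tac.
transitivity (rho (\sum_(pa <- DU a) SU pa.1 * pa.2) (\sum_(pb <- DR b) SR pb.1 * pb.2)).
  rewrite (bil_suml brho); apply: eq_bigr => pa _; rewrite (bil_sumr brho).
  by apply: eq_bigr => pb _; rewrite hSTr rmul.
by rewrite ha1 ha0 (bilZl brho) (bilZr brho) r11 scalerA hETr.
Qed.

Lemma T_ant2 (t : T) : \sum_(p <- DT t) p.1 * ST p.2 = (eT t)%:A.
Proof.
tdestr; hopf_destr hU; hopf_destr hR.
move: t; eapply (@span T); [by lin_tac|by lin_tac|move=> a b].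
rewrite csT_rho /=; last by lin_tac.
transitivity (rho (\sum_(pa <- DU a) pa.1 * SU pa.2) (\sum_(pb <- DR b) pb.1 * SR pb.2)).
  rewrite (bil_suml brho); apply: eq_bigr => pa _; rewrite (bil_sumr brho).
  by apply: eq_bigr => pb _; rewrite hSTr rmul.
by rewrite ha2 ha3 (bilZl brho) (bilZr brho) r11 scalerA hETr.
Qed.

Lemma T_hopf : is_hopf DT eT ST.
Proof.
tdestr.
do 3 (split; first by [apply: DT_mul || apply: DT_one || apply: hDTl]).
split; first exact: DT_coas.
split; first exact: hETl.
split; first exact: eT_mul.
split; first exact: eT_one.
split; first exact: T_cu1.
split; first exact: T_cu2.
split; first exact: hSTl.
split; first exact: T_ant1.
exact: T_ant2.
Qed.

Definition gg (x : O) : T := rho (iota x) 1 - rho 1 (pi x).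

Lemma ST_g x : ST (gg x) = gg (SO x).
Proof.
tdestr; rewrite /gg (linB hSTl) !hSTr (hom_S hO hU hiota) (hom_S hO hR hpi).
by rewrite (S1 hU) (S1 hR).
Qed.

Lemma eT_g x : eT (gg x) = 0.
Proof.
tdestr; hopf_destr hU; hopf_destr hR.
have [il [im [i1 [iD ie]]]] := hiota; have [pl [pm [p1 [pD pe]]]] := hpi.
by rewrite /gg (linkB hETl) !hETr ie pe he1 he0 mulr1 mul1r subrr.
Qed.

Definition Gs (x : O) : seq (T * T) :=
  [seq (gg p.1, rho (iota p.2) 1) | p <- DO x] ++
  [seq (rho 1 (pi p.1), gg p.2) | p <- DO x].

Lemma DT_g x : tens_eq (DT (gg x)) (Gs x).
Proof.
move=> W f bf; tdestr; hopf_destr hU; hopf_destr hR.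
have [il [im [i1 [iD ie]]]] := hiota; have [pl [pm [p1 [pD pe]]]] := hpi.
have cl := cs_linF hDTl (F := fun p => f p.1 p.2) bf.
rewrite /gg (linB cl) /= big_cat !big_map /=.
rewrite !csT_rho /=; try by lin_tac.
rewrite (tensP (iD x)) /=; last by lin_tac.
rewrite big_map /=.
under eq_bigr => j _ do ((rewrite (tensP hD0); last by lin_tac); rewrite big_seq1 /=).
rewrite (tensP hD1) /=; last by lin_tac.
rewrite big_seq1 /= (tensP (pD x)) /=; last by lin_tac.
rewrite big_map /=.
rewrite /gg.
under [X in _ = X + _]eq_bigr do rewrite (bilBl bf).
under [X in _ = _ + X]eq_bigr do rewrite (bilBr bf).
by rewrite !sumrB addrA subrK.
Qed.

Definition J (t : T) : Prop :=
  exists l : seq (T * O * T), t = \sum_(z <- l) z.1.1 * gg z.1.2 * z.2.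

Lemma J1 a y b : J (a * gg y * b).
Proof. by exists [:: (a, y, b)]; rewrite big_seq1. Qed.

Definition trip (a : T) (G : seq (T * T)) (b : T) : seq (T * T) :=
  [seq (pq.1 * r.1, pq.2 * r.2) | pq <- [seq (p.1 * q.1, p.2 * q.2) | p <- DT a, q <- G], r <- DT b].

Lemma DT_trip a y b : tens_eq (DT (a * gg y * b)) (trip a (Gs y) b).
Proof.
move=> W f bf; tdestr.
rewrite /trip sum_allp sum_allp /=.
rewrite (tensP (DT_mul (a * gg y) b)) /=; last by lin_tac.
rewrite sum_allp /= (tensP (DT_mul a (gg y))) /=; last by lin_tac.
rewrite sum_allp /=; apply: eq_bigr => p _.
rewrite (tensP (DT_g y)) /=; last by lin_tac.
done.
Qed.

Lemma trip_mem a y b w : w \in trip a (Gs y) b -> J w.1 \/ J w.2.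
Proof.
case/allpairsP => -[pq r] [/= /allpairsP [[p q] [/= pin qin ->]] rin ->] /=.
move: qin; rewrite mem_cat => /orP [] /mapP [z zin ->] /=.
  by left; apply: J1.
by right; apply: J1.
Qed.

Lemma J_ideal : hopf_ideal DT eT ST J.
Proof.
have TH := T_hopf; tdestr.
split; first by exists [::]; rewrite big_nil.
split.
  move=> u v [l1 ->] [l2 ->]; exists (l1 ++ l2); by rewrite big_cat.
split.
  move=> c u [l ->]; exists [seq (c *: z.1.1, z.1.2, z.2) | z <- l].
  rewrite big_map scaler_sumr; apply: eq_bigr => z _ /=; by rewrite !scalerAl.
split.
  move=> a u b [l ->]; exists [seq (a * z.1.1, z.1.2, z.2 * b) | z <- l].
  rewrite big_map mulr_sumr mulr_suml; apply: eq_bigr => z _ /=; by rewrite !mulrA.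
split.
  move=> u [l ->].
  exists (flatten [seq trip z.1.1 (Gs z.1.2) z.2 | z <- l]); split.
    move=> W f bf.
    have cl := cs_linF hDTl (F := fun p => f p.1 p.2) bf.
    rewrite (lin_sum cl) big_flatten big_map /=.
    apply: eq_bigr => z _; exact: (DT_trip z.1.1 z.1.2 z.2 bf).
  move=> w /flattenP [sw /mapP [z _ ->]]; exact: trip_mem.
split.
  move=> u [l ->]; rewrite (link_sum hETl) big1 // => z _.
  by rewrite !eT_mul eT_g mulr0 mul0r.
move=> u [l ->]; exists [seq (ST z.2, SO z.1.2, ST z.1.1) | z <- l].
rewrite (lin_sum hSTl) big_map; apply: eq_bigr => z _ /=.
by rewrite !(S_antimul TH) ST_g mulrA.
Qed.
End Main.

Unset Implicit Arguments. Set Strict Implicit.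

Theorem proposition1p1p2
  (k : fieldType)
  (U : algType k) (DU : U -> seq (U * U)) (eU : U -> k) (SU : U -> U)
  (hU : is_hopf DU eU SU)
  (O : comAlgType k) (DO : O -> seq (O * O)) (eO : O -> k) (SO : O -> O)
  (hO : is_hopf DO eO SO)
  (iota : O -> U) (hiota : hopf_hom DO eO DU eU iota)
  (iota_inj : injective iota)
  (iota_central : forall (x : O) (u : U), iota x * u = u * iota x)
  (chi : O -> k) (hchi : kpoint chi)
  (R : comAlgType k) (DR : R -> seq (R * R)) (eR : R -> k) (SR : R -> R)
  (hR : is_hopf DR eR SR)
  (pi : O -> R) (hpi : hopf_hom DO eO DR eR pi)
  (pi_surj : forall r : R, exists x : O, pi x = r)
  (pi_ker : gen_subgroup_ideal DO eO SO chi (fun x => pi x = 0))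
  (T : algType k) (rho : U -> R -> T) (hT : is_tensor_algebra rho)
  (DT : T -> seq (T * T)) (eT : T -> k) (ST : T -> T)
  (hDT : tensor_hopf_structure rho DU eU SU DR eR SR DT eT ST) :
  is_hopf DT eT ST /\
  hopf_ideal DT eT ST
    (fun t : T => exists l : seq (T * O * T),
       t = \sum_(z <- l) z.1.1 * (rho (iota z.1.2) 1 - rho 1 (pi z.1.2)) * z.2).
Proof.
split; first exact: (T_hopf hU hR hT hDT).
exact: (J_ideal hU hO hiota hR hpi hT hDT).
Qed.
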